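(* Let $R$ be the set of pairs $(\lambda,\mu)$ with $\lambda$ a triangular partition and $\mu$ a partition whose parts are nonnegative integers (zero parts allowed, counted in $\ell(\mu)$). Let $A_1$ be the set of pairs $(X,Y)$ with $X$ a partition into distinct positive parts, $Y$ a partition into nonnegative parts, and $a(Y)<s(X)$; let $A_2$ be the set of pairs $(X,Y)$ with $X$ a partition into distinct positive parts, $Y$ a nonempty triangular partition, and $a(Y)<s(X)$. For $(\lambda,\mu)\in R$ let $k=\min(\ell(\lambda),\ell(\mu))$, $p=\max(\ell(\lambda),\ell(\mu))$, $\nu=\lambda+\mu=(\nu_1,\dots,\nu_p)$, and set $\phi(\lambda,\mu)=((\nu_1,\dots,\nu_k),(\nu_{k+1},\dots,\nu_p))$. Then $\phi$ is a bijection from $R$ onto $A_1\sqcup A_2$ such that, writing $\phi(\lambda,\mu)=(X,Y)$: $|\lambda|+|\mu|=|X|+|Y|$; if $\ell(\lambda)\le\ell(\mu)$ then $(X,Y)\in A_1$, $\ell(X)=\ell(\lambda)$ and $\ell(X)+\ell(Y)=\ell(\mu)$; if $\ell(\lambda)>\ell(\mu)$ then $(X,Y)\in A_2$, $\ell(X)=\ell(\mu)$ and $\ell(X)+\ell(Y)=\ell(\lambda)$.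
   Context: A partition is a weakly decreasing finite sequence of integers; $\ell(A)$ is its number of parts, $|A|$ the sum of its parts, $a(A)$ its largest part and $s(A)$ its smallest part, with the conventions $a(\emptyset)=-\infty$... more precisely, the condition $a(Y)<s(X)$ is taken to hold vacuously when $X$ or $Y$ is empty. A triangular partition is $(n,n-1,\dots,1)$ for some $n\ge0$. For partitions $A=(A_1,A_2,\dots)$ and $B=(B_1,B_2,\dots)$, $A+B=(A_1+B_1,A_2+B_2,\dots)$ of length $\max(\ell(A),\ell(B))$, where missing parts are treated as $0$. *)

(* Defs.v *)
From mathcomp Require Import all_boot.
Set Implicit Arguments. Unset Strict Implicit. Unset Printing Implicit Defensive.

Definition is_partition (s : seq nat) : bool := sorted geq s.

Definition is_triangular (s : seq nat) : bool := s == rev (iota 1 (size s)).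

Definition is_distinct_pos (s : seq nat) : bool :=
  sorted gtn s && all (fun x => 0 < x) s.

(* a(Y) < s(X), vacuous if X or Y is empty; for decreasing sequences the
   largest part is the head and the smallest the last element *)
Definition a_lt_s (Y X : seq nat) : bool :=
  (X == [::]) || (Y == [::]) || (head 0 Y < last 0 X).

Fixpoint padd (A B : seq nat) : seq nat :=
  match A, B with
  | [::], _ => B
  | _, [::] => A
  | a :: A', b :: B' => (a + b) :: padd A' B'
  end.

Definition inR (lam mu : seq nat) : bool := is_triangular lam && is_partition mu.

Definition inA1 (X Y : seq nat) : bool :=
  [&& is_distinct_pos X, is_partition Y & a_lt_s Y X].

Definition inA2 (X Y : seq nat) : bool :=
  [&& is_distinct_pos X, is_triangular Y, Y != [::] & a_lt_s Y X].

Definition inA (z : (seq nat * seq nat) + (seq nat * seq nat)) : bool :=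
  match z with
  | inl (X, Y) => inA1 X Y
  | inr (X, Y) => inA2 X Y
  end.

Definition phi (lam mu : seq nat) : seq nat * seq nat :=
  let nu := padd lam mu in
  let k := minn (size lam) (size mu) in
  (take k nu, drop k nu).

Definition phiT (lam mu : seq nat) : (seq nat * seq nat) + (seq nat * seq nat) :=
  if size lam <= size mu then inl (phi lam mu) else inr (phi lam mu).

(* Main.v *)
Require Import Defs.
From mathcomp Require Import all_boot.
From Stdlib Require Import Lia.

Ltac nlia := intros; try apply/leP;
  repeat match goal with
  | H : is_true (_ <= _) |- _ => apply (elimT leP) in H; revert H
  | H : @eq nat _ _ |- _ => revert H end;
  rewrite -?plusE -?minusE -?multE; intros; timeout 10 lia.

Definition tri n := rev (iota 1 n).

Lemma nth_tri n i : nth 0 (tri n) i = n - i.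
Proof.
rewrite /tri; case: (ltnP i n) => h.
  rewrite nth_rev ?size_iota // nth_iota; nlia.
by rewrite nth_default ?size_rev ?size_iota //; nlia.
Qed.

Lemma size_tri n : size (tri n) = n.
Proof. by rewrite /tri size_rev size_iota. Qed.

Lemma triE s : is_triangular s -> s = tri (size s).
Proof. by move/eqP. Qed.

Lemma nth_padd A B i : nth 0 (padd A B) i = nth 0 A i + nth 0 B i.
Proof.
elim: A B i => [|a A IH] [|b B] [|i] //=; by rewrite ?addn0.
Qed.

Lemma size_padd A B : size (padd A B) = maxn (size A) (size B).
Proof.
elim: A B => [|a A IH] [|b B] //=; rewrite ?maxn0 ?max0n //.
by rewrite IH maxnSS.
Qed.

Lemma sumn_padd A B : sumn (padd A B) = sumn A + sumn B.
Proof.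
elim: A B => [|a A IH] [|b B] //=; rewrite ?addn0 //.
rewrite IH; nlia.
Qed.

Lemma part_nth s i j : is_partition s -> i <= j -> nth 0 s j <= nth 0 s i.
Proof.
move=> hs; elim: j => [|j IH]; first by rewrite leqn0 => /eqP ->.
rewrite leq_eqVlt => /orP [/eqP -> //| hij].
apply: leq_trans (IH hij).
case: (ltnP j.+1 (size s)) => hj.
  exact: (sortedP 0 hs j hj).
by rewrite (nth_default 0 hj).
Qed.

Lemma tri_eq s n : size s = n -> (forall i, i < n -> nth 0 s i = n - i) -> is_triangular s.
Proof.
move=> hs h; apply/eqP; apply: (@eq_from_nth _ 0).
  by rewrite size_rev size_iota.
move=> i hi; rewrite -/(tri _) nth_tri hs h //; by rewrite -hs.
Qed.

Lemma stats_tri n mu X Y : is_partition mu -> phi (tri n) mu = (X, Y) ->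
  [/\ sumn (tri n) + sumn mu = sumn X + sumn Y,
      size (tri n) <= size mu ->
        [/\ inA1 X Y, size X = size (tri n) & size X + size Y = size mu]
    & size mu < size (tri n) ->
        [/\ inA2 X Y, size X = size mu & size X + size Y = size (tri n)]].
Proof.
rewrite /phi size_tri => hmu [<- <-].
set m := size mu. set nu := padd (tri n) mu.
have hnu i : nth 0 nu i = n - i + nth 0 mu i by rewrite nth_padd nth_tri.
have hsz : size nu = maxn n m by rewrite size_padd size_tri.
have hpm i j : i <= j -> nth 0 mu j <= nth 0 mu i by apply: part_nth.
have hsum : size (take (minn n m) nu) + size (drop (minn n m) nu) = size nu.
  by rewrite -size_cat cat_take_drop.
have hdp k : k <= n -> k <= size nu -> is_distinct_pos (take k nu).
  move=> hk hkn; apply/andP; split.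
    apply/(sortedP 0) => i; rewrite size_takel // => hi.
    rewrite /= !nth_take // ?hnu; last by nlia.
    have := hpm i i.+1 (leqnSn i); nlia.
  apply/(all_nthP 0) => i; rewrite size_takel // => hi.
  rewrite nth_take // hnu; nlia.
split.
- by rewrite -sumn_padd -sumn_cat cat_take_drop.
- move=> hnm; have hk : minn n m = n by apply/minn_idPl.
  rewrite hk; rewrite hk in hsum.
  have hszn : size nu = m by rewrite hsz; apply/maxn_idPr.
  have hX := hdp n (leqnn n) (ltac:(by rewrite hszn)).
  split; last by rewrite hsum hszn.
  + apply/and3P; split => //.
    * apply/(sortedP 0) => i; rewrite size_drop hszn => hi /=.
      rewrite !nth_drop !hnu addnS.
      have := hpm (n+i) (n+i).+1 (leqnSn _); nlia.
    * rewrite /a_lt_s; have [hn0|hn0] := posnP n; first by rewrite hn0 take0.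
      apply/orP; right.
      rewrite -nth0 nth_drop addn0 hnu -nth_last size_takel ?hszn //.
      rewrite nth_take ?prednK // hnu.
      have e := prednK hn0; have := hpm n.-1 n (leq_pred n); nlia.
  + by rewrite size_takel // hszn.
- move=> hmn; have hk : minn n m = m by apply/minn_idPr; apply: ltnW.
  rewrite hk; rewrite hk in hsum.
  have hszn : size nu = n by rewrite hsz; apply/maxn_idPl; apply: ltnW.
  have hX := hdp m (ltnW hmn) (ltac:(by rewrite hszn ltnW)).
  split; last by rewrite hsum hszn.
  + apply/and4P; split => //.
    * apply: (@tri_eq _ (n - m)); first by rewrite size_drop hszn.
      move=> i hi; rewrite nth_drop hnu (nth_default 0 (leq_addr i m)); nlia.
    * by rewrite -size_eq0 size_drop hszn subn_eq0 -ltnNge.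
    * rewrite /a_lt_s; have [hm0|hm0] := posnP m; first by rewrite hm0 take0.
      apply/orP; right.
      rewrite -nth0 nth_drop addn0 hnu -nth_last (@size_takel m); last by rewrite hszn ltnW.
      rewrite nth_take ?prednK // hnu (nth_default 0 (leqnn m)).
      have e := prednK hm0; nlia.
  + by rewrite size_takel // hszn ltnW.
Qed.

Lemma stats lam mu X Y : inR lam mu -> phi lam mu = (X, Y) ->
  [/\ sumn lam + sumn mu = sumn X + sumn Y,
      size lam <= size mu ->
        [/\ inA1 X Y, size X = size lam & size X + size Y = size mu]
    & size mu < size lam ->
        [/\ inA2 X Y, size X = size mu & size X + size Y = size lam]].
Proof. case/andP => /eqP hl hmu; rewrite hl; exact: stats_tri. Qed.

Lemma ds_ge c s : sorted gtn s -> (0 < size s -> c < last 0 s) ->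
  forall i, i < size s -> c + (size s - i) <= nth 0 s i.
Proof.
elim: s => [|x s IH] //= hs hl [|i] hi /=.
- case: s IH hs hl {hi} => [|y s] IH hs hl /=; first by have := hl isT; rewrite /= subn0 addn1.
  move: hs => /= /andP [hxy hs].
  have := IH hs hl 0 isT; move: hxy => /=; nlia.
- apply: IH => //; first exact: path_sorted hs.
  case: s hs hl hi => [|y s] //.
Qed.

Lemma mk_part X N : sorted gtn X -> (forall i, i < size X -> N - i <= nth 0 X i) ->
  is_partition (mkseq (fun i => nth 0 X i - (N - i)) (size X)).
Proof.
move=> hX hge; apply/(sortedP 0) => i; rewrite size_mkseq => hi.
rewrite (nth_mkseq _ _ hi) (nth_mkseq _ _ (ltnW hi)) /=.
have := (sortedP 0 hX) i hi; have := hge i.+1 hi; rewrite /=; nlia.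
Qed.

Lemma padd_mk X Y N M : (forall i, i < size X -> N - i <= nth 0 X i) ->
  (forall j, N - (size X + j) + nth 0 M j = nth 0 Y j) ->
  size X + size Y = maxn N (size X + size M) ->
  padd (tri N) (mkseq (fun i => nth 0 X i - (N - i)) (size X) ++ M) = X ++ Y.
Proof.
move=> hge hY hs; apply: (@eq_from_nth _ 0).
  by rewrite size_padd size_tri !size_cat size_mkseq hs.
move=> i _; rewrite nth_padd nth_tri !nth_cat size_mkseq.
case: ltnP => h.
  rewrite nth_mkseq //; have := hge i h; nlia.
by rewrite -hY subnKC.
Qed.

Lemma nuE l m i : inR l m -> nth 0 (padd l m) i = size l - i + nth 0 m i.
Proof. by case/andP => /eqP hl _; rewrite nth_padd {1}hl -/(tri _) nth_tri. Qed.

Lemma fin l1 m1 l2 m2 : inR l1 m1 -> inR l2 m2 -> size l1 = size l2 ->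
  size m1 = size m2 -> padd l1 m1 = padd l2 m2 -> l1 = l2 /\ m1 = m2.
Proof.
move=> h1 h2 hl hm hp; split.
  by case/andP: h1 => /eqP -> _; case/andP: h2 => /eqP -> _; rewrite hl.
apply: (@eq_from_nth _ 0) => // i _.
have := nuE _ _ i h1; have := nuE _ _ i h2; rewrite hp hl => -> /eqP.
by rewrite eqn_add2l => /eqP.
Qed.

Lemma phi_cat l m : (phi l m).1 ++ (phi l m).2 = padd l m.
Proof. by rewrite /phi /= cat_take_drop. Qed.

Lemma part_cat A Y : is_partition A -> is_partition Y ->
  (0 < size A -> head 0 Y <= last 0 A) -> is_partition (A ++ Y).
Proof.
case: A => [|a A] // hA hY h.
rewrite /is_partition /= cat_path; rewrite /is_partition /= in hA; rewrite hA /=.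
case: Y hY h => [|y Y] //= hY h.
by rewrite /= (h isT).
Qed.

Theorem mainTheorem6 :
  [/\ (* phi maps R into A1 ⊔ A2 *)
      (forall lam mu : seq nat, inR lam mu -> inA (phiT lam mu)),
      (* injective on R *)
      (forall lam1 mu1 lam2 mu2 : seq nat, inR lam1 mu1 -> inR lam2 mu2 ->
         phiT lam1 mu1 = phiT lam2 mu2 -> lam1 = lam2 /\ mu1 = mu2),
      (* surjective onto A1 ⊔ A2 *)
      (forall z, inA z -> exists lam mu : seq nat, inR lam mu /\ phiT lam mu = z)
    & (* statistics *)
      (forall lam mu X Y : seq nat, inR lam mu -> phi lam mu = (X, Y) ->
         [/\ sumn lam + sumn mu = sumn X + sumn Y,
             size lam <= size mu ->
               [/\ inA1 X Y, size X = size lam & size X + size Y = size mu]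
           & size mu < size lam ->
               [/\ inA2 X Y, size X = size mu & size X + size Y = size lam]])].
Proof.
split.
- move=> lam mu hR; rewrite /phiT; case E: (phi lam mu) => [X Y].
  have [_ h1 h2] := stats _ _ _ _ hR E.
  case: ifP => h /=; first by case: (h1 h).
  by case: (h2 _); rewrite // ltnNge h.
- move=> l1 m1 l2 m2 h1 h2; rewrite /phiT.
  have hc := phi_cat l1 m1; have hc2 := phi_cat l2 m2.
  case E1: (phi l1 m1) hc => [X1 Y1] /= hc.
  case E2: (phi l2 m2) hc2 => [X2 Y2] /= hc2.
  have [_ a1 b1] := stats _ _ _ _ h1 E1; have [_ a2 b2] := stats _ _ _ _ h2 E2.
  case: ifP => ha; case: ifP => hb; try discriminate.
  + case=> e1 e2; subst X2 Y2; apply: fin => //; rewrite -?hc -?hc2 //.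
    * by case: (a1 ha) => _ <- _; case: (a2 hb) => _ <- _.
    * by case: (a1 ha) => _ _ <-; case: (a2 hb) => _ _ <-.
  + have ha' : size m1 < size l1 by rewrite ltnNge ha.
    have hb' : size m2 < size l2 by rewrite ltnNge hb.
    case=> e1 e2; subst X2 Y2; apply: fin => //; rewrite -?hc -?hc2 //.
    * by case: (b1 ha') => _ _ <-; case: (b2 hb') => _ _ <-.
    * by case: (b1 ha') => _ <- _; case: (b2 hb') => _ <- _.
- case=> [[X Y]|[X Y]] /=.
  + case/and3P => hX hY hXY; have /andP [hXs hXp] := hX.
    set n := size X.
    have hl : 0 < n -> 0 < last 0 X.
      move=> hn; rewrite -nth_last; apply: (all_nthP 0 hXp).
      by rewrite prednK.
    have hge0 := ds_ge 0 X hXs hl.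
    have hge : forall i, i < n -> n - i <= nth 0 X i.
      by move=> i hi; have := hge0 i hi; rewrite add0n.
    have hp : padd (tri n) (mkseq (fun i => nth 0 X i - (n - i)) n ++ Y) = X ++ Y.
      apply: padd_mk => //.
        by move=> j; rewrite /n subnDA subnn sub0n add0n.
      by rewrite (maxn_idPr (leq_addr _ _)).
    exists (tri n), (mkseq (fun i => nth 0 X i - (n - i)) n ++ Y); split.
      apply/andP; split; first by apply/eqP; rewrite size_tri.
      apply: part_cat => //; first exact: mk_part.
      rewrite size_mkseq => hn.
      have e := prednK hn.
      rewrite -nth_last size_mkseq nth_mkseq; last by rewrite e.
      move: hXY; rewrite /a_lt_s -nth_last.
      case/orP => [/orP [/eqP hX0|/eqP ->] | h] //.
      by move: hn; rewrite /n hX0.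
    have := hge n.-1; rewrite e => hh; have := hh (leqnn n); move: h; rewrite -/n; nlia.
    rewrite /phiT size_tri size_cat size_mkseq leq_addr /phi hp size_tri size_cat.
    by rewrite size_mkseq (minn_idPl (leq_addr _ _)) take_size_cat ?drop_size_cat.
  + case/and4P => hX hYt hY0 hXY; have /andP [hXs hXp] := hX.
    set m := size X. set t := size Y.
    have hYn : forall j, nth 0 Y j = t - j.
      by move=> j; rewrite {1}(triE _ hYt) nth_tri.
    have ht : 0 < t by rewrite lt0n size_eq0.
    have hl : 0 < m -> t < last 0 X.
      move=> hm; move: hXY; rewrite /a_lt_s (negbTE hY0) -nth0 hYn subn0 orbF.
      case/orP=> [/eqP hX0|//]; by move: hm; rewrite /m hX0.
    have hge0 := ds_ge t X hXs hl.
    have hge : forall i, i < m -> (m + t) - i <= nth 0 X i.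
      by move=> i hi; have := hge0 i hi; nlia.
    have hp : padd (tri (m + t)) (mkseq (fun i => nth 0 X i - (m + t - i)) m ++ [::]) = X ++ Y.
      apply: padd_mk => //.
        by move=> j; rewrite nth_nil addn0 hYn; nlia.
      by rewrite addn0 (maxn_idPl (leq_addr _ _)).
    rewrite cats0 in hp.
    exists (tri (m + t)), (mkseq (fun i => nth 0 X i - (m + t - i)) m); split.
      apply/andP; split; first by apply/eqP; rewrite size_tri.
      exact: mk_part.
    rewrite /phiT size_tri size_mkseq ifN; last by rewrite -ltnNge; nlia.
    rewrite /phi hp size_tri size_mkseq (minn_idPr (leq_addr _ _)).
    by rewrite take_size_cat ?drop_size_cat.
- exact: stats.
Qed.
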